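(* Let $m,n$ be positive integers and suppose $\mathbf{a},\mathbf{b}\in\mathcal{T}^{n+1}$, $\mathbf{c},\mathbf{d}\in\mathcal{T}^{n}$, $\mathbf{f},\mathbf{g}\in\mathcal{T}^{m+1}$, $\mathbf{h},\mathbf{e}\in\mathcal{T}^{m}$ satisfy \[ (\phi_{\mathbf{a}}\phi^*_{\mathbf{a}}+\phi_{\mathbf{b}}\phi^*_{\mathbf{b}}+\phi_{\mathbf{c}}\phi^*_{\mathbf{c}}+\phi_{\mathbf{d}}\phi^*_{\mathbf{d}})(x)=2(2n+1),\qquad (\phi_{\mathbf{e}}\phi^*_{\mathbf{e}}+\phi_{\mathbf{f}}\phi^*_{\mathbf{f}}+\phi_{\mathbf{g}}\phi^*_{\mathbf{g}}+\phi_{\mathbf{h}}\phi^*_{\mathbf{h}})(x)=2(2m+1) \] in $\mathcal{R}[x^{\pm1}]$. Then there exist $\mathbf{q},\mathbf{r},\mathbf{s},\mathbf{t}\in\mathcal{T}^{(2m+1)(2n+1)}$ such that \[ (\phi_{\mathbf{q}}\phi^*_{\mathbf{q}}+\phi_{\mathbf{r}}\phi^*_{\mathbf{r}}+\phi_{\mathbf{s}}\phi^*_{\mathbf{s}}+\phi_{\mathbf{t}}\phi^*_{\mathbf{t}})(x)=4(2m+1)(2n+1). \] (Equivalently, the same statement holds with $\psi$ in place of $\phi$ throughout.)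
   Context: $\mathcal{R}$ is a commutative ring with identity equipped with an involutive ring automorphism $*$, extended to $\mathcal{R}[x^{\pm1}]$ by acting on coefficients and $x\mapsto x^{-1}$; $f^*$ denotes the image of $f$. $\mathcal{T}$ is a multiplicatively closed subset of $\mathcal{R}\setminus\{0\}$ with $-1\in\mathcal{T}$ and $\mathcal{T}^*=\mathcal{T}$. For $\mathbf{a}=(a_0,\dots,a_{l-1})\in\mathcal{R}^l$, $\phi_{\mathbf{a}}(x)=\sum_{i=0}^{l-1}a_ix^i$ and $\psi_{\mathbf{a}}(x)=x^{1-l}\phi_{\mathbf{a}}(x^2)$; note $\psi_{\mathbf{a}}\psi_{\mathbf{a}}^*(x)=\phi_{\mathbf{a}}\phi^*_{\mathbf{a}}(x^2)$. *)

(* Defs.v *)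
From HB Require Import structures.
From mathcomp Require Import all_boot all_order all_algebra.
Set Implicit Arguments. Unset Strict Implicit. Unset Printing Implicit Defensive.
Import GRing.Theory.
Local Open Scope ring_scope.

(* Laurent polynomials over R: a pair (k, p) represents x^{-k} * p(x). *)
Section Laurent.
Variable R : comNzRingType.

Definition laurent := (nat * {poly R})%type.

(* equality in R[x^{+-1}]:  x^{-k} p = x^{-k'} p'  iff  p x^{k'} = p' x^{k} *)
Definition lequiv (u v : laurent) : Prop := u.2 * 'X^(v.1) = v.2 * 'X^(u.1).

Definition ladd (u v : laurent) : laurent :=
  ((u.1 + v.1)%N, u.2 * 'X^(v.1) + v.2 * 'X^(u.1)).

Definition lmul (u v : laurent) : laurent := ((u.1 + v.1)%N, u.2 * v.2).

Definition lconst (c : R) : laurent := (0%N, c%:P).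

Definition phiL (s : seq R) : laurent := (0%N, \poly_(i < size s) s`_i).

(* phi_a^star(x) = sum_{i<l} conj(a_i) x^{-i}
             = x^{-(l-1)} sum_{i<l} conj(a_{l-1-i}) x^i *)
Definition phistarL (conj : R -> R) (s : seq R) : laurent :=
  ((size s).-1, \poly_(i < size s) conj s`_((size s).-1 - i)).

Definition normL (conj : R -> R) (s : seq R) : laurent :=
  lmul (phiL s) (phistarL conj s).

Definition norm4 (conj : R -> R) (a b c d : seq R) : laurent :=
  ladd (ladd (ladd (normL conj a) (normL conj b)) (normL conj c)) (normL conj d).

End Laurent.

(* Main.v *)
Require Import Defs.
From HB Require Import structures.
From mathcomp Require Import all_boot all_order all_algebra.
From mathcomp Require Import zify ring.
Import GRing.Theory.
Local Open Scope ring_scope.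

Section RC.
Variable R : comNzRingType.
Variable conj : {rmorphism R -> R}.
Hypothesis conj_inv : involutive conj.

Definition rc (d : nat) (p : {poly R}) : {poly R} := \poly_(i < d.+1) conj p`_(d - i).

Lemma coef_rc d p i : (rc d p)`_i = if (i <= d)%N then conj p`_(d - i) else 0.
Proof. by rewrite /rc coef_poly ltnS. Qed.

Lemma rcD d p q : rc d (p + q) = rc d p + rc d q.
Proof. by apply/polyP=> i; rewrite coefD !coef_rc coefD; case: ifP => _; rewrite ?rmorphD ?addr0. Qed.

Lemma rcN d p : rc d (- p) = - rc d p.
Proof. by apply/polyP=> i; rewrite coefN !coef_rc coefN; case: ifP => _; rewrite ?rmorphN ?oppr0. Qed.

Lemma rc0 d : rc d 0 = 0.
Proof. by apply/polyP=> i; rewrite coef_rc !coef0; case: ifP => _; rewrite ?rmorph0. Qed.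

Lemma rcZ d c p : rc d (c *: p) = conj c *: rc d p.
Proof. by apply/polyP=> i; rewrite coefZ !coef_rc coefZ; case: ifP => _; rewrite ?rmorphM ?mulr0. Qed.

Lemma rc_sum d k (F : 'I_k -> {poly R}) : rc d (\sum_(i < k) F i) = \sum_(i < k) rc d (F i).
Proof. exact: (big_morph (rc d) (rcD d) (rc0 d)). Qed.

Lemma size_rc d p : (size (rc d p) <= d.+1)%N.
Proof. exact: size_poly. Qed.

Lemma rcXnM j d1 d2 (q : {poly R}) : (j <= d1)%N -> (size q <= d2.+1)%N ->
  rc (d1 + d2) ('X^j * q) = 'X^(d1 - j) * rc d2 q.
Proof.
move=> hj hq; apply/polyP=> i; rewrite coef_rc !coefXnM coef_rc.
have q0 : forall k, (d2 < k)%N -> q`_k = 0.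
  by move=> k hk; apply: nth_default; apply: leq_trans hq _.
case: (leqP i (d1 + d2)) => h1; case: (ltnP (d1 + d2 - i) j) => h2;
  case: (ltnP i (d1 - j)) => h3; case: (leqP (i - (d1 - j)) d2) => h4;
  rewrite ?rmorph0 //; try (exfalso; lia).
- by rewrite q0 ?rmorph0 //; lia.
- by congr (conj q`_ _); lia.
Qed.

Lemma rc01 : rc 0 1 = 1.
Proof. apply/polyP=> i; rewrite coef_rc !coef1; case: i => [|i] /=; by rewrite ?rmorph1. Qed.

Lemma rcZXn j d c : (j <= d)%N -> rc d (c *: 'X^j) = conj c *: 'X^(d - j).
Proof.
move=> hj; rewrite rcZ; congr (_ *: _).
have := @rcXnM j d 0 1 hj; rewrite size_poly1 addn0 mulr1 rc01 mulr1; apply; done.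
Qed.

Lemma poly_expand {d} {p : {poly R}} : (size p <= d.+1)%N -> p = \sum_(i < d.+1) p`_i *: 'X^i.
Proof.
move=> hp; rewrite -poly_def; apply/polyP=> i; rewrite coef_poly.
by case: ifP => // /negbT; rewrite -leqNgt => h; apply: nth_default; apply: leq_trans hp h.
Qed.

Lemma rc_expand d (p : {poly R}) : rc d p = \sum_(i < d.+1) conj p`_i *: 'X^(d - i).
Proof.
apply/polyP=> k; rewrite coef_rc coef_sum.
case: ifP => hk.
  rewrite (bigD1 (Ordinal (leq_ltn_trans (leq_subr k d) (ltnSn d)))) //= big1.
    by rewrite coefZ coefXn subKn // eqxx mulr1 addr0.
  move=> i hi; rewrite coefZ coefXn.
  case: eqP => [e|]; last by rewrite mulr0.
  by exfalso; move/eqP: hi; apply; apply/val_inj => /=; have := ltn_ord i; lia.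
rewrite big1 // => i _; rewrite coefZ coefXn; case: eqP => [e|]; last by rewrite mulr0.
by exfalso; have := ltn_ord i; move/negbT: hk; lia.
Qed.

Lemma rcM d1 d2 (p q : {poly R}) : (size p <= d1.+1)%N -> (size q <= d2.+1)%N ->
  rc (d1 + d2) (p * q) = rc d1 p * rc d2 q.
Proof.
move=> hp hq; rewrite {1}(poly_expand hp) mulr_suml rc_sum rc_expand mulr_suml.
apply: eq_bigr => i _; rewrite -scalerAl rcZ rcXnM // ?scalerAl //.
by have := ltn_ord i.
Qed.

Lemma rcK d (p : {poly R}) : (size p <= d.+1)%N -> rc d (rc d p) = p.
Proof.
move=> hp; apply/polyP=> i; rewrite !coef_rc.
case: ifP => hi; first by rewrite leq_subr conj_inv subKn.
by symmetry; apply: nth_default; apply: leq_trans hp _; rewrite ltnNge hi.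
Qed.

Lemma size_compXn {d} k {p : {poly R}} : (size p <= d.+1)%N -> (size (p \Po 'X^k) <= (d * k).+1)%N.
Proof.
move=> hp; apply: leq_trans (size_comp_poly_leq _ _) _; rewrite size_polyXn /= ltnS.
by apply: leq_mul => //; move: hp; case: (size p).
Qed.

Lemma rc_comp d k (p : {poly R}) : (0 < k)%N -> (size p <= d.+1)%N ->
  rc (d * k) (p \Po 'X^k) = rc d p \Po 'X^k.
Proof.
move=> hk hp; rewrite {1}(poly_expand hp) raddf_sum /= rc_sum (rc_expand d p) raddf_sum /=.
apply: eq_bigr => i _.
rewrite !comp_polyZ !comp_Xn_poly -!exprM rcZXn; last first.
  by rewrite mulnC leq_mul2r; have := ltn_ord i; rewrite ltnS => ->; rewrite orbT.
by congr (_ *: 'X^_); rewrite mulnBr mulnC.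
Qed.


Lemma coef_compM K (W p : {poly R}) i : (size W <= K)%N ->
  ((p \Po 'X^K) * W)`_i = p`_(i %/ K) * W`_(i %% K).
Proof.
move=> hW.
have W0 : forall k, (K <= k)%N -> W`_k = 0.
  by move=> k hk; apply: nth_default; apply: leq_trans hW hk.
case: (posnP K) => [K0|Kpos].
  by move: hW; rewrite K0 size_poly_leq0 => /eqP ->; rewrite mulr0 !coef0 mulr0.
elim/poly_ind: p i => [|p c IH] i.
  by rewrite comp_poly0 mul0r !coef0 mul0r.
rewrite comp_poly_MXaddC mulrDl coefD coefCM mulrAC coefMXn coefD coefMX coefC.
case: (ltnP i K) => hi.
  by rewrite divn_small // modn_small //= !add0r.
rewrite IH (W0 i hi) mulr0 addr0.
have -> : i = ((i - K) + K)%N by rewrite subnK.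
rewrite addnK divnDr ?dvdnn // divnn Kpos addn1 /= addr0.
by rewrite modnDr.
Qed.

Lemma coef_shift2 j (w : {poly R}) r :
  ('X^j * (w \Po 'X^2))`_r = if (r < j)%N then 0 else if (2 %| (r - j))%N then w`_((r - j) %/ 2) else 0.
Proof. by rewrite coefXnM coef_comp_poly_Xn. Qed.

Lemma term_rc K da db j (pa pb : {poly R}) : (0 < K)%N ->
  (size pa <= da.+1)%N -> (size pb <= db.+1)%N ->
  rc (da * K + (j + j + db * 2)) ((pa \Po 'X^K) * ('X^j * (pb \Po 'X^2))) =
  (rc da pa \Po 'X^K) * ('X^j * (rc db pb \Po 'X^2)).
Proof.
move=> hK ha hb.
rewrite rcM ?size_compXn //; last first.
  apply: leq_trans (size_mul_leq _ _) _; rewrite size_polyXn.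
  have := size_compXn 2 hb; case: (size _) => [|s] //= hs; lia.
rewrite rc_comp //; congr (_ * _).
by rewrite rcXnM ?leq_addr ?size_compXn // addKn rc_comp.
Qed.

Lemma size_term K da db j (pa pb : {poly R}) :
  (size pa <= da.+1)%N -> (size pb <= db.+1)%N ->
  (size ((pa \Po 'X^K) * ('X^j * (pb \Po 'X^2)))%R <= (da * K + (j + db * 2)).+1)%N.
Proof.
move=> ha hb.
apply: leq_trans (size_mul_leq _ _) _.
have h1 := size_compXn K ha.
have h2 : (size ('X^j * (pb \Po 'X^2))%R <= (j + db * 2).+1)%N.
  apply: leq_trans (size_mul_leq _ _) _; rewrite size_polyXn.
  have := size_compXn 2 hb; case: (size _) => [|s] //= hs; lia.
move: h1 h2; case: (size (pa \Po _)) => [|s1]; case: (size ('X^j * _)%R) => [|s2] //=; lia.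
Qed.

Lemma normL_eq (s : seq R) : (0 < size s)%N ->
  normL conj s = ((size s).-1, \poly_(i < size s) s`_i * rc (size s).-1 (\poly_(i < size s) s`_i)).
Proof.
move=> hs; rewrite /normL /lmul /phiL /phistarL /= add0n; congr pair; congr (_ * _).
rewrite /rc prednK //; apply: eq_poly => i hi; rewrite coef_poly.
by rewrite ifT //; move: hi hs; case: (size s) => //= n; lia.
Qed.

Lemma normL_tuple k (s : k.+1.-tuple R) :
  normL conj s = (k, \poly_(i < k.+1) s`_i * rc k (\poly_(i < k.+1) s`_i)).
Proof. by rewrite normL_eq size_tuple. Qed.

Lemma poly_mkseq L (P : {poly R}) : (size P <= L)%N ->
  \poly_(i < size (mkseq (fun k => P`_k) L)) (mkseq (fun k => P`_k) L)`_i = P.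
Proof.
move=> hP; rewrite size_mkseq; apply/polyP => i; rewrite coef_poly.
case: ifP => hi; first by rewrite nth_mkseq.
by symmetry; apply: nth_default; apply: leq_trans hP _; rewrite leqNgt hi.
Qed.


Lemma term_rc' K da db j D (pa pb : {poly R}) : (0 < K)%N ->
  (size pa <= da.+1)%N -> (size pb <= db.+1)%N -> D = (da * K + (j + j + db * 2))%N ->
  rc D ((pa \Po 'X^K) * ('X^j * (pb \Po 'X^2))) =
  (rc da pa \Po 'X^K) * ('X^j * (rc db pb \Po 'X^2)).
Proof. by move=> hK ha hb ->; apply: term_rc. Qed.

Lemma size_term' K da db j D (pa pb : {poly R}) :
  (size pa <= da.+1)%N -> (size pb <= db.+1)%N -> (da * K + (j + db * 2) <= D)%N ->
  (size ((pa \Po 'X^K) * ('X^j * (pb \Po 'X^2)))%R <= D.+1)%N.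
Proof. by move=> ha hb hD; apply: leq_trans (size_term K _ _ j _ _ ha hb) _. Qed.

Lemma sizeD_le k (p q : {poly R}) : (size p <= k)%N -> (size q <= k)%N -> (size (p + q)%R <= k)%N.
Proof. by move=> hp hq; apply: leq_trans (size_polyD _ _) _; rewrite geq_max hp hq. Qed.

Lemma sizeB_le k (p q : {poly R}) : (size p <= k)%N -> (size q <= k)%N -> (size (p - q)%R <= k)%N.
Proof. by move=> hp hq; apply: sizeD_le => //; rewrite size_polyN. Qed.

Lemma coef_term K db j (pa pb : {poly R}) k : (size pb <= db.+1)%N -> (j + db * 2 < K)%N ->
  ((pa \Po 'X^K) * ('X^j * (pb \Po 'X^2)))`_k =
  pa`_(k %/ K) * (if (k %% K < j)%N then 0 else if (2 %| (k %% K - j))%N then pb`_((k %% K - j) %/ 2) else 0).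
Proof.
move=> hb hK; rewrite coef_compM ?coef_shift2 //.
apply: leq_trans (size_mul_leq _ _) _; rewrite size_polyXn.
have := size_compXn 2 hb; case: (size _) => [|s] //= hs; lia.
Qed.

Lemma norm_mk L (P : {poly R}) : (0 < L)%N -> (size P <= L)%N ->
  normL conj (mkseq (fun k => P`_k) L) = (L.-1, P * rc L.-1 P).
Proof.
move=> hL hP; rewrite normL_eq; last by rewrite size_mkseq.
by rewrite poly_mkseq // size_mkseq.
Qed.

End RC.

Lemma inT (R : comNzRingType) (T : {pred R}) k (s : k.-tuple R) i :
  all (fun x => x \in T) s -> (i < k)%N -> s`_i \in T.
Proof. by move=> /allP hs hi; apply: hs; apply: mem_nth; rewrite size_tuple. Qed.

Lemma eq_via {R : comNzRingType} {A B C D : R} : C = D -> A = C -> B = D -> A = B.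
Proof. by move=> h -> ->. Qed.

Lemma inT' (R : comNzRingType) (T : {pred R}) k (s : k.-tuple R) :
  all (fun x => x \in T) s -> forall i, (i < k)%N -> s`_i \in T.
Proof. by move=> /allP hs i hi; apply: hs; apply: mem_nth; rewrite size_tuple. Qed.

Lemma inT_rc (R : comNzRingType) (T : {pred R}) (conj : R -> R)
  (T_conj : forall x, (conj x \in T) = (x \in T)) k (s : k.+1.-tuple R) :
  all (fun x => x \in T) s -> forall i, (i < k.+1)%N -> conj (\poly_(j < k.+1) s`_j)`_(k - i) \in T.
Proof.
move=> hs i hi; rewrite T_conj coef_poly ifT; last by rewrite ltnS leq_subr.
by apply: (inT' _ _ _ _ hs); rewrite ltnS leq_subr.
Qed.
Lemma coef_in_T (R : comNzRingType) (T : {pred R})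
  (T_mul : forall x y, x \in T -> y \in T -> x * y \in T)
  (n m N : nat) (hN : N = (2 * m.+1 + 1)%N)
  (G0 G1 GN GN1 F0 F1 FN FN1 : nat -> R) (e0 e1 eN eN1 : R)
  (he0 : e0 \in T) (he1 : e1 \in T) (heN : eN \in T) (heN1 : eN1 \in T)
  (hG0 : forall i, (i < n.+2)%N -> G0 i \in T) (hG1 : forall i, (i < n.+2)%N -> G1 i \in T)
  (hGN : forall i, (i < n.+1)%N -> GN i \in T) (hGN1 : forall i, (i < n.+1)%N -> GN1 i \in T)
  (hF0 : forall i, (i < m.+2)%N -> F0 i \in T) (hF1 : forall i, (i < m.+1)%N -> F1 i \in T)
  (hFN : forall i, (i < m.+2)%N -> FN i \in T) (hFN1 : forall i, (i < m.+1)%N -> FN1 i \in T)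
  k : (k < (2 * m.+1 + 1) * (2 * n.+1 + 1))%N ->
  (e0 *: ((\poly_(i < n.+2) G0 i \Po 'X^(N + N)) * ('X^0 * (\poly_(i < m.+2) F0 i \Po 'X^2)))
   + e1 *: ((\poly_(i < n.+2) G1 i \Po 'X^(N + N)) * ('X^1 * (\poly_(i < m.+1) F1 i \Po 'X^2)))
   + eN *: ((\poly_(i < n.+1) GN i \Po 'X^(N + N)) * ('X^N * (\poly_(i < m.+2) FN i \Po 'X^2)))
   + eN1 *: ((\poly_(i < n.+1) GN1 i \Po 'X^(N + N)) * ('X^(N.+1) * (\poly_(i < m.+1) FN1 i \Po 'X^2))))`_k
  \in T.
Proof.
move=> hk.
have j0 : (0 + m.+1 * 2 < N + N)%N by lia.
have j1 : (1 + m * 2 < N + N)%N by lia.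
have jN : (N + m.+1 * 2 < N + N)%N by lia.
have jN1 : (N.+1 + m * 2 < N + N)%N by lia.
rewrite !coefD !coefZ.
rewrite (coef_term _ (N + N) m.+1 0 _ _ k (size_poly _ _) j0).
rewrite (coef_term _ (N + N) m 1 _ _ k (size_poly _ _) j1).
rewrite (coef_term _ (N + N) m.+1 N _ _ k (size_poly _ _) jN).
rewrite (coef_term _ (N + N) m N.+1 _ _ k (size_poly _ _) jN1).
rewrite !coef_poly.
have hr : (k %% (N + N) < N + N)%N by rewrite ltn_pmod //; lia.
have hkd := divn_eq k (N + N).
move: (k %/ (N + N))%N (k %% (N + N))%N hr hkd => u r hr hkd.
have hu1 : (u <= n.+1)%N.
  rewrite leqNgt; apply/negP => hu.
  have := leq_mul hu (leqnn N); nia.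
have hu2 : (N <= r)%N -> (u <= n)%N.
  move=> hNr; rewrite leqNgt; apply/negP => hu.
  have := leq_mul hu (leqnn N); nia.
clear hk hkd.
repeat (case: ifP => ?; try (exfalso; lia)).
all: rewrite ?mulr0 ?mul0r ?addr0 ?add0r.
all: apply: (T_mul) => //; apply: (T_mul).
all: first [ apply: (hG0); lia | apply: (hG1); lia | apply: (hGN); lia | apply: (hGN1); lia | apply: (hF0); lia | apply: (hF1); lia | apply: (hFN); lia | apply: (hFN1); lia ].
Qed.

Theorem theorem3p3 (R : comNzRingType) (conj : {rmorphism R -> R}) (T : {pred R})
  (conj_inv : involutive conj)
  (T_mul : forall x y, x \in T -> y \in T -> x * y \in T)
  (T_nz : 0 \notin T)
  (T_m1 : -1 \in T)
  (T_conj : forall x, (conj x \in T) = (x \in T))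
  (m n : nat) (m_pos : (0 < m)%N) (n_pos : (0 < n)%N)
  (a b : n.+1.-tuple R) (c d : n.-tuple R)
  (f g : m.+1.-tuple R) (h e : m.-tuple R)
  (Ha : all (fun x => x \in T) a) (Hb : all (fun x => x \in T) b)
  (Hc : all (fun x => x \in T) c) (Hd : all (fun x => x \in T) d)
  (Hf : all (fun x => x \in T) f) (Hg : all (fun x => x \in T) g)
  (Hh : all (fun x => x \in T) h) (He : all (fun x => x \in T) e)
  (H1 : lequiv (norm4 conj a b c d) (lconst (2 * (2 * n + 1))%N%:R))
  (H2 : lequiv (norm4 conj e f g h) (lconst (2 * (2 * m + 1))%N%:R)) :
  exists q r s t : ((2 * m + 1) * (2 * n + 1))%N.-tuple R,
    [/\ all (fun x => x \in T) q, all (fun x => x \in T) r,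
        all (fun x => x \in T) s, all (fun x => x \in T) t &
        lequiv (norm4 conj q r s t)
               (lconst (4 * (2 * m + 1) * (2 * n + 1))%N%:R)].
Proof.
case: n n_pos a b c d Ha Hb Hc Hd H1 => // n _ a b c d Ha Hb Hc Hd H1.
case: m m_pos f g h e Hf Hg Hh He H2 => // m _ f g h e Hf Hg Hh He H2.
rewrite /lequiv /norm4 /ladd /lconst !normL_tuple /= in H1 H2.
set pa := \poly_(i < n.+2) a`_i in H1 H2 *. set pb := \poly_(i < n.+2) b`_i in H1 H2 *.
set pc := \poly_(i < n.+1) c`_i in H1 H2 *. set pd := \poly_(i < n.+1) d`_i in H1 H2 *.
set pe := \poly_(i < m.+1) e`_i in H1 H2 *. set pf := \poly_(i < m.+2) f`_i in H1 H2 *.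
set pg := \poly_(i < m.+2) g`_i in H1 H2 *. set ph := \poly_(i < m.+1) h`_i in H1 H2 *.
set K1 := (2 * (2 * n.+1 + 1))%N in H1 *. set K2 := (2 * (2 * m.+1 + 1))%N in H2 *.
have E1 : pa * rc R conj n.+1 pa + pb * rc R conj n.+1 pb + 'X * (pc * rc R conj n pc + pd * rc R conj n pd)
   = K1%:R%:P * 'X^(n.+1).
  apply: (monic_rreg (monicXn _ (n + n + n).+1)) => /=.
  apply: (eq_via H1).
    rewrite !(exprD, exprS) expr0; set y := ('X^n : {poly R}); ring.
  rewrite !(exprD, exprS); set y := ('X^n : {poly R}); ring.
have E2 : pf * rc R conj m.+1 pf + pg * rc R conj m.+1 pg + 'X * (pe * rc R conj m pe + ph * rc R conj m ph)
   = K2%:R%:P * 'X^(m.+1).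
  apply: (monic_rreg (monicXn _ (m + m + m).+1)) => /=.
  apply: (eq_via H2).
    rewrite !(exprD, exprS) expr0; set y := ('X^m : {poly R}); ring.
  rewrite !(exprD, exprS); set y := ('X^m : {poly R}); ring.
clear H1 H2.
have [N hN] : {N : nat | N = (2 * m.+1 + 1)%N} by exists (2 * m.+1 + 1)%N.
pose K := (N + N)%N.
have hK : (0 < K)%N by rewrite /K hN.
pose D := (n.+1 * K + m.+1 * 2)%N.
have dA : D = (n.+1 * K + (0 + 0 + m.+1 * 2))%N by rewrite /D /K; clear -hN; lia.
have dB : D = (n.+1 * K + (1 + 1 + m * 2))%N by rewrite /D /K; clear -hN; lia.
have dC : D = (n * K + (N + N + m.+1 * 2))%N by rewrite /D /K; clear -hN; lia.
have dD : D = (n * K + (N.+1 + N.+1 + m * 2))%N by rewrite /D /K; clear -hN; lia.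
have lA : (n.+1 * K + (0 + m.+1 * 2) <= D)%N by rewrite /D /K; clear -hN; lia.
have lB : (n.+1 * K + (1 + m * 2) <= D)%N by rewrite /D /K; clear -hN; lia.
have lC : (n * K + (N + m.+1 * 2) <= D)%N by rewrite /D /K; clear -hN; lia.
have lD : (n * K + (N.+1 + m * 2) <= D)%N by rewrite /D /K; clear -hN; lia.
have sa : (size pa <= n.+2)%N by apply: size_poly.
have sb : (size pb <= n.+2)%N by apply: size_poly.
have sc : (size pc <= n.+1)%N by apply: size_poly.
have sd : (size pd <= n.+1)%N by apply: size_poly.
have se : (size pe <= m.+1)%N by apply: size_poly.
have sf : (size pf <= m.+2)%N by apply: size_poly.
have sg : (size pg <= m.+2)%N by apply: size_poly.
have sh : (size ph <= m.+1)%N by apply: size_poly.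
have sra : (size (rc R conj n.+1 pa) <= n.+2)%N by apply: size_rc.
have srb : (size (rc R conj n.+1 pb) <= n.+2)%N by apply: size_rc.
have src : (size (rc R conj n pc) <= n.+1)%N by apply: size_rc.
have srd : (size (rc R conj n pd) <= n.+1)%N by apply: size_rc.
have sre : (size (rc R conj m pe) <= m.+1)%N by apply: size_rc.
have srf : (size (rc R conj m.+1 pf) <= m.+2)%N by apply: size_rc.
have srg : (size (rc R conj m.+1 pg) <= m.+2)%N by apply: size_rc.
have srh : (size (rc R conj m ph) <= m.+1)%N by apply: size_rc.
pose P1 := ((pa \Po 'X^K) * ('X^(0) * ((rc R conj m.+1 pf) \Po 'X^2))) + (((rc R conj n.+1 pb) \Po 'X^K) * ('X^(1) * (pe \Po 'X^2))) - ((pc \Po 'X^K) * ('X^(N) * ((rc R conj m.+1 pg) \Po 'X^2))) - (((rc R conj n pd) \Po 'X^K) * ('X^(N.+1) * (ph \Po 'X^2))).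
pose P1t := (((rc R conj n.+1 pa) \Po 'X^K) * ('X^(0) * (pf \Po 'X^2))) + ((pb \Po 'X^K) * ('X^(1) * ((rc R conj m pe) \Po 'X^2))) - (((rc R conj n pc) \Po 'X^K) * ('X^(N) * (pg \Po 'X^2))) - ((pd \Po 'X^K) * ('X^(N.+1) * ((rc R conj m ph) \Po 'X^2))).
pose P2 := ((pa \Po 'X^K) * ('X^(1) * ((rc R conj m pe) \Po 'X^2))) - (((rc R conj n.+1 pb) \Po 'X^K) * ('X^(0) * (pf \Po 'X^2))) + (((rc R conj n pc) \Po 'X^K) * ('X^(N.+1) * (ph \Po 'X^2))) - ((pd \Po 'X^K) * ('X^(N) * ((rc R conj m.+1 pg) \Po 'X^2))).
pose P2t := (((rc R conj n.+1 pa) \Po 'X^K) * ('X^(1) * (pe \Po 'X^2))) - ((pb \Po 'X^K) * ('X^(0) * ((rc R conj m.+1 pf) \Po 'X^2))) + ((pc \Po 'X^K) * ('X^(N.+1) * ((rc R conj m ph) \Po 'X^2))) - (((rc R conj n pd) \Po 'X^K) * ('X^(N) * (pg \Po 'X^2))).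
pose P3 := ((pa \Po 'X^K) * ('X^(0) * (pg \Po 'X^2))) + ((pc \Po 'X^K) * ('X^(N) * (pf \Po 'X^2))) + ((pb \Po 'X^K) * ('X^(1) * (ph \Po 'X^2))) + ((pd \Po 'X^K) * ('X^(N.+1) * (pe \Po 'X^2))).
pose P3t := (((rc R conj n.+1 pa) \Po 'X^K) * ('X^(0) * ((rc R conj m.+1 pg) \Po 'X^2))) + (((rc R conj n pc) \Po 'X^K) * ('X^(N) * ((rc R conj m.+1 pf) \Po 'X^2))) + (((rc R conj n.+1 pb) \Po 'X^K) * ('X^(1) * ((rc R conj m ph) \Po 'X^2))) + (((rc R conj n pd) \Po 'X^K) * ('X^(N.+1) * ((rc R conj m pe) \Po 'X^2))).
pose P4 := ((pa \Po 'X^K) * ('X^(1) * ((rc R conj m ph) \Po 'X^2))) + (((rc R conj n pd) \Po 'X^K) * ('X^(N) * (pf \Po 'X^2))) - ((pb \Po 'X^K) * ('X^(0) * ((rc R conj m.+1 pg) \Po 'X^2))) - (((rc R conj n pc) \Po 'X^K) * ('X^(N.+1) * (pe \Po 'X^2))).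
pose P4t := (((rc R conj n.+1 pa) \Po 'X^K) * ('X^(1) * (ph \Po 'X^2))) + ((pd \Po 'X^K) * ('X^(N) * ((rc R conj m.+1 pf) \Po 'X^2))) - (((rc R conj n.+1 pb) \Po 'X^K) * ('X^(0) * (pg \Po 'X^2))) - ((pc \Po 'X^K) * ('X^(N.+1) * ((rc R conj m pe) \Po 'X^2))).
have R1 : rc R conj D P1 = P1t.
  rewrite /P1 !rcD ?rcN.
  rewrite (term_rc' R conj K n.+1 m.+1 0 D pa (rc R conj m.+1 pf) hK sa srf dA).
  rewrite (term_rc' R conj K n.+1 m 1 D (rc R conj n.+1 pb) pe hK srb se dB).
  rewrite (term_rc' R conj K n m.+1 N D pc (rc R conj m.+1 pg) hK sc srg dC).
  rewrite (term_rc' R conj K n m N.+1 D (rc R conj n pd) ph hK srd sh dD).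
  by rewrite ?(rcK _ _ conj_inv _ _ sa) ?(rcK _ _ conj_inv _ _ sb) ?(rcK _ _ conj_inv _ _ sc) ?(rcK _ _ conj_inv _ _ sd) ?(rcK _ _ conj_inv _ _ se) ?(rcK _ _ conj_inv _ _ sf) ?(rcK _ _ conj_inv _ _ sg) ?(rcK _ _ conj_inv _ _ sh).
have R2 : rc R conj D P2 = P2t.
  rewrite /P2 !rcD ?rcN.
  rewrite (term_rc' R conj K n.+1 m 1 D pa (rc R conj m pe) hK sa sre dB).
  rewrite (term_rc' R conj K n.+1 m.+1 0 D (rc R conj n.+1 pb) pf hK srb sf dA).
  rewrite (term_rc' R conj K n m N.+1 D (rc R conj n pc) ph hK src sh dD).
  rewrite (term_rc' R conj K n m.+1 N D pd (rc R conj m.+1 pg) hK sd srg dC).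
  by rewrite ?(rcK _ _ conj_inv _ _ sa) ?(rcK _ _ conj_inv _ _ sb) ?(rcK _ _ conj_inv _ _ sc) ?(rcK _ _ conj_inv _ _ sd) ?(rcK _ _ conj_inv _ _ se) ?(rcK _ _ conj_inv _ _ sf) ?(rcK _ _ conj_inv _ _ sg) ?(rcK _ _ conj_inv _ _ sh).
have R3 : rc R conj D P3 = P3t.
  rewrite /P3 !rcD ?rcN.
  rewrite (term_rc' R conj K n.+1 m.+1 0 D pa pg hK sa sg dA).
  rewrite (term_rc' R conj K n m.+1 N D pc pf hK sc sf dC).
  rewrite (term_rc' R conj K n.+1 m 1 D pb ph hK sb sh dB).
  rewrite (term_rc' R conj K n m N.+1 D pd pe hK sd se dD).
  by rewrite ?(rcK _ _ conj_inv _ _ sa) ?(rcK _ _ conj_inv _ _ sb) ?(rcK _ _ conj_inv _ _ sc) ?(rcK _ _ conj_inv _ _ sd) ?(rcK _ _ conj_inv _ _ se) ?(rcK _ _ conj_inv _ _ sf) ?(rcK _ _ conj_inv _ _ sg) ?(rcK _ _ conj_inv _ _ sh).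
have R4 : rc R conj D P4 = P4t.
  rewrite /P4 !rcD ?rcN.
  rewrite (term_rc' R conj K n.+1 m 1 D pa (rc R conj m ph) hK sa srh dB).
  rewrite (term_rc' R conj K n m.+1 N D (rc R conj n pd) pf hK srd sf dC).
  rewrite (term_rc' R conj K n.+1 m.+1 0 D pb (rc R conj m.+1 pg) hK sb srg dA).
  rewrite (term_rc' R conj K n m N.+1 D (rc R conj n pc) pe hK src se dD).
  by rewrite ?(rcK _ _ conj_inv _ _ sa) ?(rcK _ _ conj_inv _ _ sb) ?(rcK _ _ conj_inv _ _ sc) ?(rcK _ _ conj_inv _ _ sd) ?(rcK _ _ conj_inv _ _ se) ?(rcK _ _ conj_inv _ _ sf) ?(rcK _ _ conj_inv _ _ sg) ?(rcK _ _ conj_inv _ _ sh).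
have SP1 : (size P1 <= D.+1)%N.
  rewrite /P1; repeat (apply: sizeB_le || apply: sizeD_le).
  - exact: (size_term' _ _ _ _ _ _ _ _ sa srf lA).
  - exact: (size_term' _ _ _ _ _ _ _ _ srb se lB).
  - exact: (size_term' _ _ _ _ _ _ _ _ sc srg lC).
  - exact: (size_term' _ _ _ _ _ _ _ _ srd sh lD).
have SP2 : (size P2 <= D.+1)%N.
  rewrite /P2; repeat (apply: sizeB_le || apply: sizeD_le).
  - exact: (size_term' _ _ _ _ _ _ _ _ sa sre lB).
  - exact: (size_term' _ _ _ _ _ _ _ _ srb sf lA).
  - exact: (size_term' _ _ _ _ _ _ _ _ src sh lD).
  - exact: (size_term' _ _ _ _ _ _ _ _ sd srg lC).
have SP3 : (size P3 <= D.+1)%N.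
  rewrite /P3; repeat (apply: sizeB_le || apply: sizeD_le).
  - exact: (size_term' _ _ _ _ _ _ _ _ sa sg lA).
  - exact: (size_term' _ _ _ _ _ _ _ _ sc sf lC).
  - exact: (size_term' _ _ _ _ _ _ _ _ sb sh lB).
  - exact: (size_term' _ _ _ _ _ _ _ _ sd se lD).
have SP4 : (size P4 <= D.+1)%N.
  rewrite /P4; repeat (apply: sizeB_le || apply: sizeD_le).
  - exact: (size_term' _ _ _ _ _ _ _ _ sa srh lB).
  - exact: (size_term' _ _ _ _ _ _ _ _ srd sf lC).
  - exact: (size_term' _ _ _ _ _ _ _ _ sb srg lA).
  - exact: (size_term' _ _ _ _ _ _ _ _ src se lD).

have E1' := congr1 (fun p => p \Po 'X^K) E1.
have E2' := congr1 (fun p => p \Po 'X^2) E2.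
rewrite /= !comp_polyD !comp_polyM comp_polyX comp_polyC comp_Xn_poly in E1'.
rewrite /= !comp_polyD !comp_polyM comp_polyX comp_polyC comp_Xn_poly in E2'.
have Sig : P1 * P1t + P2 * P2t + P3 * P3t + P4 * P4t = (K1 * K2)%:R%:P * 'X^D.
  apply: (eq_via (congr2 (fun x y => x * y) E1' E2')).
    rewrite /P1 /P2 /P3 /P4 /P1t /P2t /P3t /P4t /K !(exprD, exprS) ?expr0.
    set M := ('X^N : {poly R}).
    ring.
  rewrite /D natrM polyCM (mulnC n.+1 K) (mulnC m.+1 2) exprD !exprM.
  set u := (('X^K)^+n.+1 : {poly R}); set v := (('X^2)^+m.+1 : {poly R}).
  ring.
clearbody D.
pose L := ((2 * m.+1 + 1) * (2 * n.+1 + 1))%N.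
have hLD : L = D.+1 by rewrite /L dA /K hN; clear; lia.
have hL0 : (0 < L)%N by rewrite hLD.
have mkS : forall P : {poly R}, size (mkseq (fun k => P`_k) L) == L.
  by move=> P; rewrite size_mkseq.
have memP : forall P : {poly R}, (forall k, (k < L)%N -> P`_k \in T) ->
    all (fun x => x \in T) (mkseq (fun k => P`_k) L).
  move=> P hP; apply/allP => x /mapP [k]; rewrite mem_iota add0n => /andP [_ hk] ->; exact: hP.
have T1 : 1 \in T by have := T_mul _ _ T_m1 T_m1; rewrite mulrNN mulr1.
have CP1 : forall k, (k < L)%N -> P1`_k \in T.
  move=> k hk; have -> : P1 = 1 *: ((pa \Po 'X^K) * ('X^(0) * ((rc R conj m.+1 pf) \Po 'X^2))) + 1 *: (((rc R conj n.+1 pb) \Po 'X^K) * ('X^(1) * (pe \Po 'X^2))) + (-1) *: ((pc \Po 'X^K) * ('X^(N) * ((rc R conj m.+1 pg) \Po 'X^2))) + (-1) *: (((rc R conj n pd) \Po 'X^K) * ('X^(N.+1) * (ph \Po 'X^2))).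
    by rewrite /P1 ?scale1r ?scaleN1r; ring.
  exact: (coef_in_T R T T_mul n m N hN (fun i => a`_i) (fun i => conj pb`_(n.+1 - i)) (fun i => c`_i) (fun i => conj pd`_(n - i)) (fun i => conj pf`_(m.+1 - i)) (fun i => e`_i) (fun i => conj pg`_(m.+1 - i)) (fun i => h`_i) 1 1 (-1) (-1) T1 T1 T_m1 T_m1 (inT' _ _ _ _ Ha) (inT_rc _ _ _ T_conj _ _ Hb) (inT' _ _ _ _ Hc) (inT_rc _ _ _ T_conj _ _ Hd) (inT_rc _ _ _ T_conj _ _ Hf) (inT' _ _ _ _ He) (inT_rc _ _ _ T_conj _ _ Hg) (inT' _ _ _ _ Hh)   k hk).
have CP2 : forall k, (k < L)%N -> P2`_k \in T.
  move=> k hk; have -> : P2 = (-1) *: (((rc R conj n.+1 pb) \Po 'X^K) * ('X^(0) * (pf \Po 'X^2))) + 1 *: ((pa \Po 'X^K) * ('X^(1) * ((rc R conj m pe) \Po 'X^2))) + (-1) *: ((pd \Po 'X^K) * ('X^(N) * ((rc R conj m.+1 pg) \Po 'X^2))) + 1 *: (((rc R conj n pc) \Po 'X^K) * ('X^(N.+1) * (ph \Po 'X^2))).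
    by rewrite /P2 ?scale1r ?scaleN1r; ring.
  exact: (coef_in_T R T T_mul n m N hN (fun i => conj pb`_(n.+1 - i)) (fun i => a`_i) (fun i => d`_i) (fun i => conj pc`_(n - i)) (fun i => f`_i) (fun i => conj pe`_(m - i)) (fun i => conj pg`_(m.+1 - i)) (fun i => h`_i) (-1) 1 (-1) 1 T_m1 T1 T_m1 T1 (inT_rc _ _ _ T_conj _ _ Hb) (inT' _ _ _ _ Ha) (inT' _ _ _ _ Hd) (inT_rc _ _ _ T_conj _ _ Hc) (inT' _ _ _ _ Hf) (inT_rc _ _ _ T_conj _ _ He) (inT_rc _ _ _ T_conj _ _ Hg) (inT' _ _ _ _ Hh)   k hk).
have CP3 : forall k, (k < L)%N -> P3`_k \in T.
  move=> k hk; have -> : P3 = 1 *: ((pa \Po 'X^K) * ('X^(0) * (pg \Po 'X^2))) + 1 *: ((pb \Po 'X^K) * ('X^(1) * (ph \Po 'X^2))) + 1 *: ((pc \Po 'X^K) * ('X^(N) * (pf \Po 'X^2))) + 1 *: ((pd \Po 'X^K) * ('X^(N.+1) * (pe \Po 'X^2))).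
    by rewrite /P3 ?scale1r ?scaleN1r; ring.
  exact: (coef_in_T R T T_mul n m N hN (fun i => a`_i) (fun i => b`_i) (fun i => c`_i) (fun i => d`_i) (fun i => g`_i) (fun i => h`_i) (fun i => f`_i) (fun i => e`_i) 1 1 1 1 T1 T1 T1 T1 (inT' _ _ _ _ Ha) (inT' _ _ _ _ Hb) (inT' _ _ _ _ Hc) (inT' _ _ _ _ Hd) (inT' _ _ _ _ Hg) (inT' _ _ _ _ Hh) (inT' _ _ _ _ Hf) (inT' _ _ _ _ He)   k hk).
have CP4 : forall k, (k < L)%N -> P4`_k \in T.
  move=> k hk; have -> : P4 = (-1) *: ((pb \Po 'X^K) * ('X^(0) * ((rc R conj m.+1 pg) \Po 'X^2))) + 1 *: ((pa \Po 'X^K) * ('X^(1) * ((rc R conj m ph) \Po 'X^2))) + 1 *: (((rc R conj n pd) \Po 'X^K) * ('X^(N) * (pf \Po 'X^2))) + (-1) *: (((rc R conj n pc) \Po 'X^K) * ('X^(N.+1) * (pe \Po 'X^2))).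
    by rewrite /P4 ?scale1r ?scaleN1r; ring.
  exact: (coef_in_T R T T_mul n m N hN (fun i => b`_i) (fun i => a`_i) (fun i => conj pd`_(n - i)) (fun i => conj pc`_(n - i)) (fun i => conj pg`_(m.+1 - i)) (fun i => conj ph`_(m - i)) (fun i => f`_i) (fun i => e`_i) (-1) 1 1 (-1) T_m1 T1 T1 T_m1 (inT' _ _ _ _ Hb) (inT' _ _ _ _ Ha) (inT_rc _ _ _ T_conj _ _ Hd) (inT_rc _ _ _ T_conj _ _ Hc) (inT_rc _ _ _ T_conj _ _ Hg) (inT_rc _ _ _ T_conj _ _ Hh) (inT' _ _ _ _ Hf) (inT' _ _ _ _ He)   k hk).
have SL1 : (size P1 <= L)%N by rewrite hLD.
have SL2 : (size P2 <= L)%N by rewrite hLD.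
have SL3 : (size P3 <= L)%N by rewrite hLD.
have SL4 : (size P4 <= L)%N by rewrite hLD.
exists (Tuple (mkS P1)), (Tuple (mkS P2)), (Tuple (mkS P3)), (Tuple (mkS P4)).
split; [exact: memP CP1 | exact: memP CP2 | exact: memP CP3 | exact: memP CP4 |].
rewrite /norm4 (norm_mk _ _ _ _ hL0 SL1) (norm_mk _ _ _ _ hL0 SL2) (norm_mk _ _ _ _ hL0 SL3) (norm_mk _ _ _ _ hL0 SL4).
have hLD' : L.-1 = D by rewrite hLD.
rewrite hLD' R1 R2 R3 R4 /lequiv /ladd /lconst /= ?add0n.
rewrite (_ : (4 * (2 * m.+1 + 1) * (2 * n.+1 + 1))%N = (K1 * K2)%N); last by rewrite /K1 /K2; clear; lia.
apply: (eq_via (congr1 (fun z => z * ('X^D * 'X^D * 'X^D)) Sig)).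
  rewrite !exprD expr0; set y := ('X^D : {poly R}); ring.
rewrite !exprD; set y := ('X^D : {poly R}); ring.
Qed.
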